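(* Let $\alpha\in\mathbb{R}$, $\beta\ge0$, $0<\mu\le1$, and define $g(\lambda)=\frac{(\lambda+\beta)^\mu}{(\lambda+\beta)^\mu+\alpha}$ for $\lambda\in\mathbb{C}$ with $\operatorname{Re}(\lambda)>0$. Then: (a) if $\alpha\ge 0$, then $|g(\lambda)|\le 1$ for all $\operatorname{Re}(\lambda)>0$; (b) if $\alpha<0$ and $\alpha+\beta^\mu\ge|\alpha|$, then $|g(\lambda)|\le\frac{\beta^\mu}{\alpha+\beta^\mu}\le\frac{\beta^\mu}{|\alpha|}$ for all $\operatorname{Re}(\lambda)>0$.
   Context: Complex powers $z^\mu$ are taken with the principal branch of the argument. *)

(* Defs.v *)
From Stdlib Require Import Reals.
From Coquelicot Require Import Coquelicot.
Open Scope R_scope.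

(* Principal argument of z, with values in (-PI, PI]; Carg 0 = 0.
   For z not on the closed negative real half-line,
   Arg z = 2 atan (Im z / (|z| + Re z)); on the negative real axis Arg = PI. *)
Definition Carg (z : C) : R :=
  if Req_EM_T (Im z) 0 then (if Rlt_dec (Re z) 0 then PI else 0)
  else 2 * atan (Im z / (Cmod z + Re z)).

(* Principal complex power z^mu = exp(mu * Log z), with 0^mu = 0 (mu > 0). *)
Definition Cpow (z : C) (mu : R) : C :=
  if Ceq_dec z 0%C then 0%C
  else RtoC (Rpower (Cmod z) mu) * (cos (mu * Carg z), sin (mu * Carg z)).

(* Real power of a nonnegative real, with 0^mu = 0 (Stdlib's Rpower 0 mu = 1). *)
Definition rpow (b mu : R) : R := if Req_EM_T b 0 then 0 else Rpower b mu.

Definition g (alpha beta mu : R) (l : C) : C :=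
  (Cpow (l + RtoC beta) mu / (Cpow (l + RtoC beta) mu + RtoC alpha))%C.

(* Main.v *)
Require Import Defs.
From Stdlib Require Import Reals.
From Coquelicot Require Import Coquelicot.
From Stdlib Require Import Lra Psatz.
Open Scope R_scope.

Lemma Cinv_zero : Cinv 0%C = 0%C.
Proof. unfold Cinv; simpl. apply injective_projections; simpl; unfold Rdiv; ring. Qed.

Lemma Cmod_div_all (u v : C) : Cmod (u / v) = Cmod u / Cmod v.
Proof.
  destruct (Ceq_dec v 0) as [->|H].
  - unfold Cdiv. rewrite Cinv_zero, Cmult_0_r, Cmod_0. unfold Rdiv. rewrite Rinv_0; ring.
  - now apply Cmod_div.
Qed.

Lemma Re_le_Cmod (c : C) : Re c <= Cmod c.
Proof.
  pose proof (Cmod2_alt c). pose proof (Cmod_ge_0 c).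
  nra.
Qed.

Lemma div_le (p q K : R) : 0 <= K -> 0 <= p -> 0 <= q -> p <= K * q -> p / q <= K.
Proof.
  intros HK Hp Hq H. destruct (Req_dec q 0) as [->|Hq'].
  - unfold Rdiv; rewrite Rinv_0; lra.
  - apply Rle_div_l; lra.
Qed.

Lemma le_from_sq (p q : R) : 0 <= q -> p ^ 2 <= q ^ 2 -> p <= q.
Proof. intros; nra. Qed.

Lemma Carg_bound (z : C) : 0 < Re z -> - (PI / 2) <= Carg z <= PI / 2.
Proof.
  intros Hz. pose proof PI_RGT_0. unfold Carg.
  destruct (Req_EM_T (Im z) 0).
  - destruct (Rlt_dec (Re z) 0); lra.
  - assert (Hb : Rabs (Im z) < Cmod z + Re z).
    { pose proof (Cmod2_alt z). pose proof (Cmod_ge_0 z).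
      assert (Rabs (Im z) <= Cmod z).
      { apply le_from_sq; [lra|]. rewrite pow2_abs. pose proof (pow2_ge_0 (Re z)). nra. }
      lra. }
    assert (Hp : 0 < Cmod z + Re z) by (pose proof (Rabs_pos (Im z)); lra).
    set (q := Im z / (Cmod z + Re z)).
    assert (-1 < q < 1).
    { unfold q. split.
      - apply Rlt_div_r; [lra|]. destruct (Rabs_def2 (Im z) (Cmod z + Re z)); lra.
      - apply Rlt_div_l; [lra|]. destruct (Rabs_def2 (Im z) (Cmod z + Re z)); lra. }
    pose proof (atan_increasing q 1 ltac:(lra)).
    pose proof (atan_increasing (-(1)) q ltac:(lra)).
    rewrite atan_opp, atan_1 in *. lra.
Qed.

Lemma Cpow_mod (z : C) (mu : R) : z <> 0%C -> Cmod (Defs.Cpow z mu) = Rpower (Cmod z) mu.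
Proof.
  intros Hz. unfold Defs.Cpow. destruct (Ceq_dec z 0); [contradiction|].
  rewrite Cmod_mult, Cmod_R.
  rewrite Rabs_pos_eq by (left; apply exp_pos).
  assert (Cmod (cos (mu * Carg z), sin (mu * Carg z)) = 1) as ->.
  { unfold Cmod; simpl. pose proof (sin2_cos2 (mu * Carg z)). unfold Rsqr in *.
    replace (cos (mu * Carg z) * (cos (mu * Carg z) * 1) +
             sin (mu * Carg z) * (sin (mu * Carg z) * 1)) with 1 by lra.
    apply sqrt_1. }
  ring.
Qed.

Lemma Cpow_re (z : C) (mu : R) : 0 < Re z -> 0 < mu <= 1 -> 0 <= Re (Defs.Cpow z mu).
Proof.
  intros Hz Hmu. unfold Defs.Cpow. destruct (Ceq_dec z 0); [simpl; lra|].
  simpl. rewrite Rmult_0_l, Rminus_0_r.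
  apply Rmult_le_pos; [left; apply exp_pos|].
  pose proof (Carg_bound z Hz). pose proof PI_RGT_0.
  apply cos_ge_0; nra.
Qed.

Theorem lemma3p2 (alpha beta mu : R) :
  0 <= beta -> 0 < mu <= 1 ->
  (0 <= alpha -> forall l : C, 0 < Re l -> Cmod (g alpha beta mu l) <= 1) /\
  (alpha < 0 -> alpha + rpow beta mu >= Rabs alpha ->
     forall l : C, 0 < Re l ->
       Cmod (g alpha beta mu l) <= rpow beta mu / (alpha + rpow beta mu) /\
       rpow beta mu / (alpha + rpow beta mu) <= rpow beta mu / Rabs alpha).
Proof.
  intros Hb Hmu. split.
  - intros Ha l Hl. unfold g. rewrite Cmod_div_all.
    set (z := (l + RtoC beta)%C).
    assert (Hz : 0 < Re z) by (unfold z; simpl; unfold Re in *; simpl; lra).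
    pose proof (Cpow_re z mu Hz Hmu) as Hx.
    set (w := Defs.Cpow z mu) in *.
    apply div_le; try lra; try apply Cmod_ge_0.
    apply le_from_sq; [pose proof (Cmod_ge_0 (w + RtoC alpha)); lra|].
    rewrite Rmult_1_l, !Cmod2_alt. simpl. change (fst w) with (Re w) in *; change (snd w) with (Im w) in *. nra.
  - intros Ha Hab l Hl.
    rewrite Rabs_left in * by lra.
    set (b := rpow beta mu) in *.
    assert (Hb0 : 0 < beta).
    { destruct Hb as [|<-]; auto. unfold b, rpow in Hab.
      destruct (Req_EM_T 0 0); lra. }
    assert (Hbe : b = Rpower beta mu).
    { unfold b, rpow. destruct (Req_EM_T beta 0); lra. }
    split.
    + unfold g. rewrite Cmod_div_all.
      set (z := (l + RtoC beta)%C).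
      assert (Hz : 0 < Re z) by (unfold z; simpl; unfold Re in *; simpl; lra).
      assert (Hz0 : z <> 0%C) by (intros E; rewrite E in Hz; simpl in Hz; lra).
      assert (Hr : b <= Cmod (Defs.Cpow z mu)).
      { rewrite Cpow_mod by auto. rewrite Hbe.
        apply Rle_Rpower_l; [lra|]. pose proof (Re_le_Cmod z). unfold z, Re in *; simpl in *. lra. }
      set (w := Defs.Cpow z mu) in *.
      pose proof (Re_le_Cmod w) as Hxr.
      set (r := Cmod w) in *.
      assert (Hr2 : r ^ 2 = Re w ^ 2 + Im w ^ 2) by apply Cmod2_alt.
      set (a := - alpha) in *. assert (Hadef : alpha = - a) by (unfold a; ring). clearbody a. subst alpha.
      apply div_le; try apply Cmod_ge_0.
      * unfold Rdiv; apply Rmult_le_pos; [lra|]. left; apply Rinv_0_lt_compat; lra.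
      * assert (Hv : b * Cmod (w + RtoC (-a)) >= r * (b - a)).
        { apply Rle_ge, le_from_sq.
          - apply Rmult_le_pos; [lra| apply Cmod_ge_0].
          - rewrite (Rpow_mult_distr b (Cmod _)), Cmod2_alt. simpl. change (fst w) with (Re w) in *; change (snd w) with (Im w) in *.
            assert (E : b ^ 2 * ((Re w - a) ^ 2 + Im w ^ 2) - (r * (b - a)) ^ 2
                    = a * ((2*b - a) * r^2 - 2 * b^2 * Re w + a * b^2)) by (rewrite Rpow_mult_distr, Hr2; ring).
            assert (0 <= a * ((r - b) * ((2*b - a) * r - a * b))).
            { apply Rmult_le_pos; [lra|]. apply Rmult_le_pos; nra. }
            assert (0 <= a * ((2*b - a) * r^2 - 2 * b^2 * Re w + a * b^2)).
            { assert (a * b^2 * (r - Re w) >= 0) by (apply Rle_ge, Rmult_le_pos; nra).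
              nra. }
            simpl in E. lra. }
        replace (b / (-a + b) * Cmod (w + RtoC (-a))) with
          ((b * Cmod (w + RtoC (-a))) / (b - a)) by (field; lra).
        apply Rle_div_r; lra.
    + apply Rmult_le_compat_l; [lra|]. apply Rinv_le_contravar; lra.
Qed.
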